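(* Let $V\subset\mathbb{R}^d$ be a finite antichain, $p\in S_V$, $v\in D_p$ with $v_i=p_i$, and assume $v$ is not an $i$-witness for $p$. Then there is a minimum $u\in D_p$ such that $T_p(u)\subsetneq T_p(v)$ and $i\in T_p(v)\setminus T_p(u)$.
   Context: For $x,y\in\mathbb{R}^d$, $x\le y$ (dominance order) means $x_i\le y_i$ for all $i$; $y\rhd x$ means $y_i>x_i$ for all $i$; $y\rhd_i x$ means $y_i=x_i$ and $y_j>x_j$ for all $j\neq i$. $V\subset\mathbb{R}^d$ is a finite antichain in the dominance order (elements are called minima). The orthogonal surface $S_V$ is the topological boundary of $\langle V\rangle=\{x: x\ge v\text{ for some }v\in V\}$; equivalently $p\in S_V$ iff there is $v\in V$ with $v\le p$ and no $w\in V$ with $p\rhd w$. For $p\in S_V$, $D_p=\{v\in V:v\le p\}$ and for $v\in D_p$, $T_p(v)=\{i: p_i=v_i\}$. For $p\in S_V$, a minimum $v\in D_p$ is an $i$-witness for $p$ if there is $q\in S_V$ with $v\le p\le q$ and $q\rhd_i v$. *)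

(* Defs.v *)
(* Points of R^d are 'rV[R]_d (coordinate i is x 0 i),
   R an arbitrary realType (abstract real numbers). *)
From HB Require Import structures.
From mathcomp Require Import all_boot all_order all_algebra.
From mathcomp Require Import reals.
Set Implicit Arguments. Unset Strict Implicit. Unset Printing Implicit Defensive.
Import Order.TTheory GRing.Theory Num.Theory.
Local Open Scope ring_scope.

Section OrthSurf.
Variables (R : realType) (d : nat).
Local Notation pt := 'rV[R]_d.

Definition dle (x y : pt) : Prop := forall i : 'I_d, x 0 i <= y 0 i.
Definition dgt (y x : pt) : Prop := forall i : 'I_d, x 0 i < y 0 i.
Definition dgt_at (i : 'I_d) (y x : pt) : Prop :=
  y 0 i = x 0 i /\ forall j : 'I_d, j != i -> x 0 j < y 0 j.

Definition antichain (V : seq pt) : Prop :=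
  forall v w, v \in V -> w \in V -> dle v w -> v = w.

Definition on_surface (V : seq pt) (p : pt) : Prop :=
  (exists2 v, v \in V & dle v p) /\ ~ (exists2 w, w \in V & dgt p w).

Definition inD (V : seq pt) (p v : pt) : Prop := v \in V /\ dle v p.

Definition Tp (p v : pt) : {set 'I_d} := [set i | p 0 i == v 0 i].

Definition witness (V : seq pt) (i : 'I_d) (p v : pt) : Prop :=
  inD V p v /\
  exists q, [/\ on_surface V q, dle v p, dle p q & dgt_at i q v].

End OrthSurf.

(* Main.v *)
Require Import Defs.
From HB Require Import structures.
From mathcomp Require Import all_boot all_order all_algebra.
From mathcomp Require Import reals.
From Stdlib Require Import Classical.
Import Order.TTheory GRing.Theory Num.Theory.
Local Open Scope ring_scope.

Lemma small_pos {R : realFieldType} (s : seq R) :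
  exists e : R, 0 < e /\ forall x, x \in s -> 0 < x -> e <= x.
Proof.
elim: s => [|x s [e [e0 He]]]; first by exists 1; split.
case: (ltP 0 x) => x0.
- case: (ltP x e) => xe.
  + exists x; split => // y; rewrite in_cons => /orP[/eqP->//|ys] y0.
    exact: (le_trans (ltW xe) (He y ys y0)).
  + exists e; split => // y; rewrite in_cons => /orP[/eqP->//|ys] y0.
    exact: He.
- exists e; split => // y; rewrite in_cons => /orP[/eqP->|ys] y0.
  + by move: (lt_le_trans y0 x0); rewrite ltxx.
  + exact: He.
Qed.

Theorem lemma4p6 (R : realType) (d : nat) (V : seq 'rV[R]_d)
    (p v : 'rV[R]_d) (i : 'I_d) :
  antichain V -> on_surface V p -> inD V p v ->
  v 0 i = p 0 i -> ~ witness V i p v ->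
  exists u, [/\ inD V p u, Tp p u \proper Tp p v & i \in Tp p v :\: Tp p u].
Proof.
move=> _ [_ _] [vV vp] vi nw.
apply: NNPP => nu; apply: nw; split => //.
have [e [e0 He]] := small_pos (R:=R) [seq (w : 'rV[R]_d) 0 j - p 0 j | w <- V, j <- enum 'I_d].
pose q : 'rV[R]_d := \row_j (if (j != i) && (p 0 j == v 0 j) then p 0 j + e else p 0 j).
have qE j : q 0 j = (if (j != i) && (p 0 j == v 0 j) then p 0 j + e else p 0 j)
  by rewrite mxE.
have pq : dle p q.
  move=> j; rewrite qE; case: ifP => _ //; by rewrite lerDl ltW.
exists q; split => //.
- split; first by exists v => // j; exact: le_trans (vp j) (pq j).
  move=> [w wV qw].
  have wp : dle w p.
    move=> j; case: (leP (w 0 j) (p 0 j)) => // pw.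
    have := He (w 0 j - p 0 j) (allpairs_f _ wV (mem_enum _ j)).
    rewrite subr_gt0 => /(_ pw); rewrite lerBrDl => hle.
    have := qw j; rewrite qE; case: ifP => _.
    + by move=> h; move: (lt_le_trans h hle); rewrite ltxx.
    + move=> h; move: (lt_trans h pw); by rewrite ltxx.
  apply: nu; exists w.
  have iw : i \in Tp p v :\: Tp p w.
    rewrite !inE vi eqxx andbT; apply/negP => /eqP h.
    by move: (qw i); rewrite qE eqxx /= h ltxx.
  have sub : Tp p w \subset Tp p v.
    apply/subsetP => j; rewrite !inE => /eqP h.
    move: (qw j); rewrite qE; case: ifP => [/andP[_ ->]//|_].
    by rewrite h ltxx.
  split => //; apply/properP; split => //; exists i.
  + by move: iw; rewrite inE => /andP[_ ->].
  + by move: iw; rewrite inE => /andP[->].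
- split; first by rewrite qE eqxx /= vi.
  move=> j ji; rewrite qE ji /=; case: ifP => [/eqP <-|].
  + by rewrite ltrDl.
  + move/negbT => h; rewrite lt_neqAle vp andbT; apply: contra h => /eqP ->.
    by rewrite eqxx.
Qed.
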